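(* Let $(M,d)$ be a compact metric space, $\mu$ a probability measure on $M$, $k:M\times M\to[0,1]$ a measurable kernel, $M^s\subseteq M$ a measurable set, and $\rho>0$. Then there exists a unique measurable map $v^*:M\to[0,1]$ such that $v^*(x)=1$ for all $x\in M^s$ and, for all $x\in M\setminus M^s$, $$v^*(x)=\frac{\int_{M^s}k(x,y)\,d\mu(y)+\int_{M\setminus M^s}v^*(y)k(x,y)\,d\mu(y)}{\rho+\int_M k(x,y)\,d\mu(y)}.$$ *)

(* Defs.v *)
From HB Require Import structures.
From mathcomp Require Import all_boot all_order all_algebra.
From mathcomp Require Import all_classical all_reals all_analysis.
Set Implicit Arguments. Unset Strict Implicit. Unset Printing Implicit Defensive.
Import Order.TTheory GRing.Theory Num.Theory.

Notation borelT T := (g_sigma_algebraType (@open T)) (only parsing).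

(* Main.v *)
Require Import Defs.
From HB Require Import structures.
From mathcomp Require Import all_boot all_order all_algebra.
From mathcomp Require Import all_classical all_reals all_analysis.
From mathcomp Require Import measurable_realfun.
From mathcomp Require Import lra.
Import Order.TTheory GRing.Theory Num.Theory.
Import numFieldNormedType.Exports.
Local Open Scope classical_set_scope.
Local Open Scope ring_scope.

Section S.
Context (R : realType) (M : pseudoPMetricType R) (mu : probability (borelT M) R)
  (k : borelT M * borelT M -> R) (mk : measurable_fun [set: borelT M * borelT M] k)
  (k01 : forall z, 0 <= k z <= 1)
  (Ms : set (borelT M)) (mMs : measurable Ms) (rho : R) (rho_gt0 : 0 < rho).

Local Notation T := (borelT M).

Lemma k_ge0 z : 0 <= k z. Proof. by case/andP: (k01 z). Qed.
Lemma k_le1 z : k z <= 1. Proof. by case/andP: (k01 z). Qed.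

Lemma mkx x : measurable_fun [set: T] (fun y => k (x, y)).
Proof. exact: measurable_fun_pair2. Qed.

Lemma int_bdc (c : R) (D : set T) (f : T -> R) : measurable D -> measurable_fun [set: T] f ->
  (forall y, `|f y| <= c) -> mu.-integrable D (EFin \o f).
Proof.
move=> mD mf fb.
apply: (le_integrable mD _ _ (finite_measure_integrable_cst mu c mD)).
  by apply/measurable_EFinP; exact: measurable_funS mf.
move=> y _ /=; rewrite lee_fin; apply: le_trans (fb y) _.
exact: ler_norm.
Qed.

Lemma int_bd (D : set T) (f : T -> R) : measurable D -> measurable_fun [set: T] f ->
  (forall y, `|f y| <= 1) -> mu.-integrable D (EFin \o f).
Proof. exact: int_bdc.
Qed.

Lemma I_meas {D : set T} (g : T -> R) : measurable D -> measurable_fun [set: T] g -> (forall y, 0 <= g y) ->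
  measurable_fun [set: T] (fun x => Rintegral mu D (fun y => g y * k (x, y))).
Proof.
move=> mD mg g0.
pose F := fun z : T * T => ((\1_D z.2 * g z.2 * k z)%:E).
have mF : measurable_fun [set: (T * T)%type] F.
  apply/measurable_EFinP; apply: measurable_funM => //.
  apply: measurable_funM.
    by apply: measurableT_comp; [exact: measurable_indic|exact: measurable_snd].
  by apply: measurableT_comp; [exact: mg|exact: measurable_snd].
have F0 z : (0 <= F z)%E.
  by rewrite lee_fin !mulr_ge0 ?g0 ?k_ge0 // indicE ler0n.
have := measurable_fun_fubini_tonelli_F (m2:=mu) F mF F0.
move/(measurableT_comp (fine_measurable measurableT)).
apply: eq_measurable_fun => x _ /=.
rewrite /Rintegral /fubini_F; congr fine; symmetry; rewrite integral_mkcond.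
apply: eq_integral => y _; rewrite /F /= patchE.
case: ifPn => yD; first by rewrite indicE yD mul1r.
by rewrite indicE (negbTE yD) !mul0r.
Qed.

Definition Kf x := Rintegral mu setT (fun y => k (x, y)).
Definition Af x := Rintegral mu Ms (fun y => k (x, y)).
Definition Bf x := Rintegral mu (~` Ms) (fun y => k (x, y)).
Definition Iv (v : T -> R) x := Rintegral mu (~` Ms) (fun y => v y * k (x, y)).
Definition Tf (v : T -> R) x :=
  \1_Ms x + \1_(~` Ms) x * ((Af x + Iv v x) / (rho + Kf x)).
Definition good (v : T -> R) := measurable_fun [set: T] v /\ forall y, 0 <= v y <= 1.

Lemma mMsC : measurable (~` Ms). Proof. exact: measurableC. Qed.

Lemma one_meas (D : set T) :  measurable D ->
  measurable_fun [set: T] (fun x => Rintegral mu D (fun y => k (x, y))).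
Proof.
move=> mD; have := I_meas (cst 1) mD (measurable_cst (1:R)) (fun _ => ler01).
by apply: eq_measurable_fun => x _; apply: eq_Rintegral => y _; rewrite mul1r.
Qed.

Lemma int_k (D : set T) x : measurable D -> mu.-integrable D (EFin \o (fun y => k (x, y))).
Proof.
move=> mD; apply: int_bd; [done|exact: mkx|move=> y].
by rewrite ger0_norm ?k_ge0 ?k_le1.
Qed.

Lemma int_vk (D : set T) v x : measurable D -> good v ->
  mu.-integrable D (EFin \o (fun y => v y * k (x, y))).
Proof.
move=> mD [mv v01]; apply: int_bd; [done|exact: (measurable_funM mv (mkx x))|move=> y]. rewrite normrM (ger0_norm (k_ge0 _)).
have /andP[v0 v1] := v01 y; rewrite ger0_norm //.
by rewrite mulr_ile1 ?k_ge0 ?k_le1.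
Qed.

Lemma Kf_split x : Kf x = Af x + Bf x.
Proof.
rewrite /Kf /Af /Bf -(setUv Ms) Rintegral_setU //.
- exact: mMsC.
- by rewrite setUv; apply: int_k.
- by rewrite /disj_set setICr.
Qed.

Lemma Af_ge0 x : 0 <= Af x.
Proof. by apply: Rintegral_ge0 => y _; apply: k_ge0. Qed.

Lemma Bf_ge0 x : 0 <= Bf x.
Proof. by apply: Rintegral_ge0 => y _; apply: k_ge0. Qed.

Lemma Kf_le1 x : Kf x <= 1.
Proof.
rewrite /Kf; apply: (@le_trans _ _ (Rintegral mu setT (fun _ => 1))).
  apply: le_Rintegral => //; first exact: int_k.
    exact: finite_measure_integrable_cst.
  by move=> y _; apply: k_le1.
rewrite Rintegral_cst // mul1r. by move: (probability_setT mu) => /= ->.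
Qed.

Lemma Kf_ge0 x : 0 <= Kf x.
Proof. by rewrite Kf_split addr_ge0 ?Af_ge0 ?Bf_ge0. Qed.

Lemma Iv_ge0 v x : good v -> 0 <= Iv v x.
Proof.
move=> [_ v01]; apply: Rintegral_ge0 => y _; apply: mulr_ge0 (k_ge0 _).
by case/andP: (v01 y).
Qed.

Lemma Iv_le v x : good v -> Iv v x <= Bf x.
Proof.
move=> gv; apply: le_Rintegral; [exact: mMsC|exact: int_vk mMsC gv|exact: int_k mMsC|].
move=> y _; have /andP[v0 v1] := gv.2 y.
by rewrite -[leRHS]mul1r ler_wpM2r ?k_ge0.
Qed.

Lemma Iv_mono v w x : good v -> good w -> (forall y, v y <= w y) -> Iv v x <= Iv w x.
Proof.
move=> gv gw vw; apply: le_Rintegral; [exact: mMsC|exact: int_vk mMsC gv|exact: int_vk mMsC gw|].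
by move=> y _; rewrite ler_wpM2r ?k_ge0.
Qed.

Lemma diff_bd (v w : T -> R) x y : good v -> good w ->
  `|v y * k (x, y) - w y * k (x, y)| <= 2.
Proof.
move=> gv gw; have /andP[v0 v1] := gv.2 y; have /andP[w0 w1] := gw.2 y.
rewrite -mulrBl normrM (ger0_norm (k_ge0 _)).
apply: (@le_trans _ _ `|v y - w y|); first by rewrite ler_piMr ?normr_ge0 ?k_le1.
apply: le_trans (ler_normB _ _) _; rewrite (ger0_norm v0) (ger0_norm w0); lra.
Qed.

Lemma diff_meas (v w : T -> R) x : good v -> good w ->
  measurable_fun [set: T] (fun y => v y * k (x, y) - w y * k (x, y)).
Proof.
move=> gv gw; apply: measurable_funB.
  exact: (measurable_funM gv.1 (mkx x)).
exact: (measurable_funM gw.1 (mkx x)).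
Qed.

Lemma int_diff (D : set T) v w x : measurable D -> good v -> good w ->
  mu.-integrable D (EFin \o (fun y => v y * k (x, y) - w y * k (x, y))).
Proof.
move=> mD gv gw; apply: (int_bdc 2) => //; first exact: diff_meas.
by move=> y; apply: diff_bd.
Qed.

Lemma int_ndiff (D : set T) v w x : measurable D -> good v -> good w ->
  mu.-integrable D (EFin \o (fun y => `|v y * k (x, y) - w y * k (x, y)|)).
Proof.
move=> mD gv gw; apply: (int_bdc 2) => //.
  by apply: measurableT_comp; [exact: normr_measurable|exact: diff_meas].
by move=> y; rewrite normr_id; apply: diff_bd.
Qed.

Lemma Iv_lip v w x s : good v -> good w -> (forall y, `|v y - w y| <= s) ->
  `|Iv v x - Iv w x| <= s * Bf x.
Proof.
move=> gv gw vws.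
rewrite /Iv -RintegralB; [|exact: mMsC|exact: int_vk mMsC gv|exact: int_vk mMsC gw].
apply: le_trans; first apply: le_normr_Rintegral; first exact: mMsC.
  exact: int_diff mMsC gv gw.
rewrite /Bf -RintegralZl; [|exact: mMsC|exact: int_k mMsC].
apply: le_Rintegral; first exact: mMsC.
- exact: int_ndiff mMsC gv gw.
- apply: (int_bdc `|s|); [exact: mMsC|exact: (measurable_funM (measurable_cst s) (mkx x))|].
  by move=> y; rewrite normrM (ger0_norm (k_ge0 _)) ler_piMr ?normr_ge0 ?k_le1.
move=> y _; rewrite -mulrBl normrM (ger0_norm (k_ge0 _)).
by rewrite ler_wpM2r ?k_ge0.
Qed.

Lemma den_gt0 x : 0 < rho + Kf x.
Proof. by rewrite ltr_wpDr ?Kf_ge0. Qed.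

Lemma Tf_in v x : Ms x -> Tf v x = 1.
Proof.
move=> Mx; rewrite /Tf !indicE mem_set //.
have -> : (x \in ~` Ms) = false by apply/negbTE; rewrite notin_setE /=; apply.
by rewrite mul0r addr0.
Qed.

Lemma Tf_out v x : ~ Ms x -> Tf v x = (Af x + Iv v x) / (rho + Kf x).
Proof.
move=> Mx; rewrite /Tf !indicE (mem_set (Mx : (~` Ms) x)).
have -> : (x \in Ms) = false by apply/negbTE; rewrite notin_setE.
by rewrite mul1r add0r.
Qed.

Lemma Iv_meas v : good v -> measurable_fun [set: T] (Iv v).
Proof.
move=> gv; apply: (I_meas v mMsC gv.1) => y.
by case/andP: (gv.2 y).
Qed.

Lemma inv_meas : measurable_fun [set: T] (fun x => (rho + Kf x)^-1).
Proof.
have -> : (fun x => (rho + Kf x)^-1) = GRing.inv \o (fun x => rho + Kf x) by [].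
apply: (measurable_comp (F := `]0, +oo[%classic : set R)).
- exact: measurable_itv.
- by move=> _ [x _ <-]; rewrite /= in_itv /= andbT den_gt0.
- apply: open_continuous_measurable_fun; first exact: interval_open.
  move=> t; rewrite inE /= in_itv /= andbT => t0.
  by apply: inv_continuous; rewrite gt_eqF.
- apply: measurable_funD; first exact: measurable_cst.
  exact: one_meas.
Qed.

Lemma Tf_good v : good v -> good (Tf v).
Proof.
move=> gv; split.
  apply: measurable_funD; first exact: measurable_indic.
  apply: measurable_funM; first by apply: measurable_indic; exact: mMsC.
  apply: measurable_funM; last exact: inv_meas.
  apply: measurable_funD; first exact: one_meas.
  exact: Iv_meas.
move=> x; have [Mx|Mx] := pselect (Ms x).
  by rewrite Tf_in // ler01 lexx.
rewrite Tf_out //; apply/andP; split.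
  by apply: divr_ge0; [rewrite addr_ge0 ?Af_ge0 ?Iv_ge0 | exact: ltW (den_gt0 x)].
rewrite ler_pdivrMr ?den_gt0 // mul1r.
have H : Af x + Iv v x <= Af x + Bf x by rewrite lerD2l Iv_le.
apply: le_trans H _.
by rewrite -Kf_split ler_wpDl // ltW.
Qed.

Definition c := (1 + rho)^-1.

Lemma opr_gt0 : 0 < 1 + rho. Proof. by rewrite addr_gt0 ?ltr01. Qed.

Lemma c_ge0 : 0 <= c. Proof. by rewrite invr_ge0 ltW // opr_gt0. Qed.

Lemma c_lt1 : c < 1.
Proof. by rewrite /c invf_lt1 ?opr_gt0 // ltrDl. Qed.

Lemma frac_le x : Kf x / (rho + Kf x) <= c.
Proof.
rewrite ler_pdivrMr ?den_gt0 // /c ler_pdivlMl ?opr_gt0 //.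
rewrite mulrDl mul1r addrC lerD2r ler_piMr ?Kf_le1 //.
exact: ltW.
Qed.

Lemma Tf_lip v w s x : good v -> good w -> (forall y, `|v y - w y| <= s) ->
  `|Tf v x - Tf w x| <= s * c.
Proof.
move=> gv gw vws.
have s0 : 0 <= s := le_trans (normr_ge0 _) (vws x).
have [Mx|Mx] := pselect (Ms x).
  by rewrite !Tf_in // subrr normr0 mulr_ge0 // c_ge0.
rewrite !Tf_out // -mulrBl.
have -> : Af x + Iv v x - (Af x + Iv w x) = Iv v x - Iv w x.
  by rewrite opprD addrACA subrr add0r.
rewrite normrM normfV (gtr0_norm (den_gt0 x)).
apply: (@le_trans _ _ (s * Kf x / (rho + Kf x))).
  apply: ler_wpM2r; first by rewrite invr_ge0 ltW // den_gt0.
  apply: le_trans (Iv_lip v w x s gv gw vws) _.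
  by rewrite ler_wpM2l // Kf_split ler_wpDl ?Af_ge0.
by rewrite -mulrA ler_wpM2l // frac_le.
Qed.

Lemma uniq_fix v w : good v -> good w -> (forall x, v x = Tf v x) ->
  (forall x, w x = Tf w x) -> v = w.
Proof.
move=> gv gw fv fw; apply/funext => x0.
pose E := [set `|v y - w y| | y in [set: T]].
have bE : has_ubound E.
  exists 2 => _ [y _ <-].
  have /andP[v0 v1] := gv.2 y; have /andP[w0 w1] := gw.2 y.
  apply: le_trans (ler_normB _ _) _; rewrite (ger0_norm v0) (ger0_norm w0).
  by rewrite -[2]/(1 + 1)%:R natrD lerD.
have nE : E !=set0 by exists `|v x0 - w x0|; exists x0.
have hs y : `|v y - w y| <= sup E by apply: (ub_le_sup bE); exists y.
have h2 : sup E <= sup E * c.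
  apply: (ge_sup nE) => _ [y _ <-]; rewrite fv fw; exact: Tf_lip.
have s0 : 0 <= sup E := le_trans (normr_ge0 _) (hs x0).
have h3 : sup E * (1 - c) <= 0 by rewrite mulrBr mulr1 subr_le0.
have h4 : sup E <= 0 by move: h3; rewrite pmulr_lle0 // subr_gt0 c_lt1.
have := le_trans (hs x0) h4; rewrite normr_le0 subr_eq0 => /eqP //.
Qed.

Lemma Tf_mono v w x : good v -> good w -> (forall y, v y <= w y) -> Tf v x <= Tf w x.
Proof.
move=> gv gw vw; have [Mx|Mx] := pselect (Ms x); first by rewrite !Tf_in.
rewrite !Tf_out //; apply: ler_wpM2r; first by rewrite invr_ge0 ltW // den_gt0.
by rewrite lerD2l; apply: Iv_mono.
Qed.

Fixpoint u (n : nat) : T -> R :=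
  if n is m.+1 then Tf (u m) else (fun _ => 0).

Lemma u_good n : good (u n).
Proof.
elim: n => [|n IH] /=; last exact: Tf_good.
by split; [exact: measurable_cst | move=> y; rewrite lexx ler01].
Qed.

Lemma u_mono n x : u n x <= u n.+1 x.
Proof.
elim: n x => [|n IH] x.
  by have /andP[] := (u_good 1).2 x.
exact: (Tf_mono (u n) (u n.+1) x (u_good n) (u_good n.+1) IH).
Qed.

Definition vs x := sup (range (u^~ x)).

Lemma u_ub x : has_ubound (range (u^~ x)).
Proof. by exists 1 => _ [n _ <-]; have /andP[] := (u_good n).2 x. Qed.

Lemma u_cvg x : u^~ x @ \oo --> vs x.
Proof.
apply: nondecreasing_cvgn; last exact: u_ub.
by apply/nondecreasing_seqP => n; apply: u_mono.
Qed.

Lemma u_le_vs n x : u n x <= vs x.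
Proof. by apply: (ub_le_sup (u_ub x)); exists n. Qed.

Lemma vs_good : good vs.
Proof.
split.
  apply: (measurable_fun_cvg (h := u)) => //; first by move=> n; exact: (u_good n).1.
  by move=> x _; exact: u_cvg.
move=> x; apply/andP; split; first exact: le_trans (u_le_vs 0 x).
apply: (ge_sup); first by exists (u 0 x), 0%N.
by move=> _ [n _ <-]; have /andP[] := (u_good n).2 x.
Qed.

Lemma Iv_cvg x : Iv (u n) x @[n --> \oo] --> Iv vs x.
Proof.
have mD := mMsC.
have mfn n : measurable_fun (~` Ms) (fun y => (u n y * k (x, y))%:E).
  apply: (measurable_funS measurableT (subsetT _)).
  by apply/measurable_EFinP; exact: (measurable_funM (u_good n).1 (mkx x)).
have mf : measurable_fun (~` Ms) (fun y => (vs y * k (x, y))%:E).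
  apply: (measurable_funS measurableT (subsetT _)).
  by apply/measurable_EFinP; exact: (measurable_funM vs_good.1 (mkx x)).
have ff : {ae mu, forall y, (~` Ms) y ->
    (fun n => (u n y * k (x, y))%:E) @ \oo --> (vs y * k (x, y))%:E}.
  apply: aeW => y _; apply: cvg_EFin; first exact: nearW.
  by apply: cvgMl; exact: u_cvg.
have fg : {ae mu, forall y n, (~` Ms) y -> (`|(u n y * k (x, y))%:E| <= (EFin \o cst (1%R : R)) y)%E}.
  apply: aeW => y n _ /=; rewrite lee_fin normrM (ger0_norm (k_ge0 _)).
  have /andP[u0 u1] := (u_good n).2 y.
  by rewrite ger0_norm // mulr_ile1 ?k_ge0 ?k_le1.
have [_ _ H] := dominated_convergence mD mfn mf ff
  (finite_measure_integrable_cst mu 1 mD) fg.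
have -> : Iv vs x = fine (\int[mu]_(y in ~` Ms) (vs y * k (x, y))%:E)%E by [].
apply: fine_cvg.
rewrite fineK; last exact: (integrable_fin_num mD (int_vk (~` Ms) vs x mD vs_good)).
apply: cvg_trans H; apply: near_eq_cvg; apply: nearW => n /=.
by [].
Qed.

Lemma vs_fix x : vs x = Tf vs x.
Proof.
have [Mx|Mx] := pselect (Ms x).
  rewrite Tf_in //; apply/le_anti/andP; split; first by have /andP[] := vs_good.2 x.
  by have := u_le_vs 1 x; rewrite /= Tf_in.
move: (u_cvg x); rewrite -cvg_shiftS => H1.
have H2 : u n.+1 x @[n --> \oo] --> Tf vs x.
  rewrite Tf_out //=.
  under eq_fun do rewrite Tf_out //.
  apply: cvgMl; apply: cvgD; [exact: cvg_cst | exact: Iv_cvg].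
exact: (cvg_unique _ H1 H2).
Qed.

Lemma good_of (w : T -> R) : measurable_fun [set: T] w -> (forall x, 0 <= w x <= 1) ->
  (forall x, Ms x -> w x = 1) ->
  (forall x, ~ Ms x ->
     w x = (Rintegral mu Ms (fun y => k (x, y))
            + Rintegral mu (~` Ms) (fun y => w y * k (x, y)))
           / (rho + Rintegral mu [set: T] (fun y => k (x, y)))) ->
  good w /\ forall x, w x = Tf w x.
Proof.
move=> mw w01 w1 wf; split => // x.
have [Mx|Mx] := pselect (Ms x); first by rewrite Tf_in // w1.
by rewrite Tf_out // {1}wf.
Qed.

End S.

Theorem theorem1 (R : realType) (M : pseudoPMetricType R)
  (M_hausdorff : hausdorff_space M) (M_compact : compact [set: M])
  (mu : probability (borelT M) R)
  (k : borelT M * borelT M -> R) (mk : measurable_fun [set: borelT M * borelT M] k)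
  (k01 : forall z, 0 <= k z <= 1)
  (Ms : set (borelT M)) (mMs : measurable Ms)
  (rho : R) (rho_gt0 : 0 < rho) :
  exists! v : borelT M -> R,
    [/\ measurable_fun [set: borelT M] v,
        (forall x, 0 <= v x <= 1),
        (forall x, Ms x -> v x = 1) &
        (forall x, ~ Ms x ->
           v x = (Rintegral mu Ms (fun y => k (x, y))
                  + Rintegral mu (~` Ms) (fun y => v y * k (x, y)))
                 / (rho + Rintegral mu [set: borelT M] (fun y => k (x, y))))].
Proof.
have gv := @vs_good R M mu k mk k01 Ms mMs rho rho_gt0.
have fv := @vs_fix R M mu k mk k01 Ms mMs rho rho_gt0.
exists (vs R M mu k Ms rho); split.
  split; [exact: gv.1 | exact: gv.2 | |].
  - by move=> x Mx; rewrite fv Tf_in.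
  - by move=> x Mx; rewrite {1}fv Tf_out.
move=> w [mw w01 w1 wf].
have [gw fw] := @good_of R M mu k Ms rho w mw w01 w1 wf.
exact: (@uniq_fix R M mu k mk k01 Ms mMs rho rho_gt0 _ _ gv gw fv fw).
Qed.
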